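(* Let $H$ be a fermionic parity-preserving Hamiltonian on $h$. Then $$[H_t,H_{t'}]=0\qquad\text{for all } t,t'\in\{0,\dots,N-1\}.$$ Consequently, with $\mathcal V:=\prod_{t=0}^{N-1}e^{i\epsilon tH_t}$ and any operators $O^{(0)},\dots,O^{(N-1)}$ on $h$, $$\mathcal V\Big(\prod_{t}O^{(t)}_t\Big)\mathcal V^\dagger=\prod_te^{i\epsilon tH_t}O^{(t)}_te^{-i\epsilon tH_t},$$ where both products are taken in the same order of $t$. In other words, each factor is replaced by its Heisenberg-evolved version $(O^{(t)}(\epsilon t))_t$ with $O(s)=e^{isH}Oe^{-isH}$.
   Context: Fix integers $L\ge1$, $N\ge1$ and a real $\epsilon>0$. The space $h$. Let $h$ be the fermionic Fock space of $L$ modes with ladder operators $a_i$ satisfying the canonical anticommutation relations. The space $\mathcal H$. Let $\mathcal H$ be the Fock space generated by $a_{ti}$, $t=0,\dots,N-1$, $i=1,\dots,L$, with $\{a_{ti},a^\dagger_{t'j}\}=\delta_{tt'}\delta_{ij}$ and all other anticommutators zero. In particular, ladder operators at different $t$ anticommute. Placing operators on a slice. For an operator $O$ on $h$, $O_t$ is its image under the unital $*$-homomorphism determined by $a_i\mapsto a_{ti}$. Parity preservation. $H$ is parity preserving if it is an even polynomial in the ladder operators, i.e. each monomial contains an even number of creation/annihilation operators. *)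

(* Defs.v *)
From HB Require Import structures.
From mathcomp Require Import all_boot all_order all_algebra.
From mathcomp Require Import all_classical all_reals all_analysis.
From mathcomp Require Import complex.
Unset Printing Implicit Defensive.
Import Order.TTheory GRing.Theory Num.Theory.
Import numFieldNormedType.Exports.
Local Open Scope classical_set_scope.
Local Open Scope ring_scope.

(* Operators on the fermionic Fock space of M modes: complex 2^M x 2^M matrices.
   The basis vector with index k (k < 2^M) is the occupation-number state
   |n_0 ... n_(M-1)> with n_j = the j-th binary digit of k. *)
Definition fop (R : realType) (M : nat) := 'M[R[i]]_(2 ^ M).

Definition occ (k j : nat) : bool := odd (k %/ 2 ^ j).

(* Jordan-Wigner sign: number of occupied modes strictly below j. *)
Definition jw_count (k j : nat) : nat := \sum_(l < j) occ k l.

(* Annihilation operator a_j on the Fock space of M modes: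
   a_j |n> = (-1)^(sum_(l<j) n_l) n_j |n - e_j>. *)
Definition annih (R : realType) (M : nat) (j : nat) : fop R M :=
  \matrix_(x, y)
    (if occ y j && ((x + 2 ^ j)%N == y :> nat)
     then (-1) ^+ jw_count y j else 0).

Definition adj (R : realType) (n : nat) (A : 'M[R[i]]_n) : 'M[R[i]]_n :=
  map_mx Num.conj (A^T).
Arguments adj {R n} A.

Definition creat (R : realType) (M : nat) (j : nat) : fop R M := adj (annih R M j).

Definition ladder (R : realType) (M : nat) (l : 'I_M * bool) : fop R M :=
  if l.2 then creat R M l.1 else annih R M l.1.

Definition monomial (R : realType) (M : nat) (w : seq ('I_M * bool)) : fop R M :=
  \prod_(l <- w) ladder R M l.

Definition parity_preserving (R : realType) (M : nat) (H : fop R M) : Prop :=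
  exists s : seq (R[i] * seq ('I_M * bool)),
    all (fun p => ~~ odd (size p.2)) s /\
    H = \sum_(p <- s) p.1 *: monomial R M p.2.

Definition herm_op (R : realType) (n : nat) (A : 'M[R[i]]_n) : Prop := adj A = A.
Arguments herm_op {R n} A.

Definition cre (R : realType) (z : R[i]) : R := let: Complex a _ := z in a.
Definition cim (R : realType) (z : R[i]) : R := let: Complex _ b := z in b.
Arguments cre {R} z.
Arguments cim {R} z.

(* Limit of a sequence of complex numbers, computed componentwise
   (R[i] carries no topology instance in the libraries). *)
Definition clim {R : realType} (u : nat -> R[i]) : R[i] :=
  Complex (lim ((fun m => cre (u m)) @ \oo)) (lim ((fun m => cim (u m)) @ \oo)).

Definition expm (R : realType) (n : nat) (A : 'M[R[i]]_n) : 'M[R[i]]_n :=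
  \matrix_(x, y)
    clim (fun m : nat => \sum_(k < m) ((A ^+ k) x y / (k`!)%:R)).
Arguments expm {R n} A.

Definition annih_ti (R : realType) (N L : nat) (t i : nat) : fop R (N * L) :=
  annih R (N * L) (t * L + i).

Definition slice_hom (R : realType) (N L : nat) (t : nat)
    (phi : fop R L -> fop R (N * L)) : Prop :=
  [/\ forall (c : R[i]) (A B : fop R L), phi (c *: A + B) = c *: phi A + phi B,
      forall A B : fop R L, phi (A * B) = phi A * phi B,
      phi 1 = 1,
      forall A : fop R L, phi (adj A) = adj (phi A) &
      forall i : nat, (i < L)%N -> phi (annih R L i) = annih_ti R N L t i].

(* Main.v *)
Require Import Defs.
From HB Require Import structures.
From mathcomp Require Import all_boot all_order all_algebra.
From mathcomp Require Import all_classical all_reals all_analysis.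
From mathcomp Require Import complex.
From mathcomp Require Import lra zify ring.
Import Order.TTheory GRing.Theory Num.Theory.
Import numFieldNormedType.Exports.

Lemma occ_ge x q : occ x q -> 2 ^ q <= x.
Proof. rewrite /occ; case: (leqP (2 ^ q) x) => // h; by rewrite divn_small. Qed.

Lemma div_add_pow n q : (n + 2 ^ q) %/ 2 ^ q = (n %/ 2 ^ q).+1.
Proof. by rewrite divnDr ?dvdnn // divnn expn_gt0 addn1. Qed.

Lemma occ_addq n q : occ (n + 2 ^ q) q = ~~ occ n q.
Proof. by rewrite /occ div_add_pow oddS. Qed.

Lemma occ_addj n q j : j != q -> ~~ occ n q -> occ (n + 2 ^ q) j = occ n j.
Proof.
rewrite /occ; case: (ltngtP j q) => // hjq _ hn.
- have e : 2 ^ q = 2 ^ (q - j) * 2 ^ j by rewrite -expnD subnK // ltnW.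
  rewrite e divnDr ?dvdn_mull // mulnK ?expn_gt0 // oddD oddX /=.
  by rewrite subn_eq0 leqNgt hjq /= addbF.
- have e : 2 ^ j = 2 ^ q * 2 ^ (j - q) by rewrite -expnD subnKC // ltnW.
  rewrite e !divnMA div_add_pow.
  move: hn; set a := n %/ 2 ^ q => hn.
  have hk : j - q = (j - q).-1.+1 by rewrite prednK // subn_gt0.
  rewrite hk expnS !divnMA !divn2 -uphalfE uphalf_half (negbTE hn) add0n //.
Qed.

Lemma jw_add n q j : ~~ occ n q -> jw_count (n + 2 ^ q) j = jw_count n j + (q < j).
Proof.
move=> hn; elim: j => [|j IH]; first by rewrite /jw_count !big_ord0.
rewrite /jw_count in IH *; rewrite !big_ord_recr /= IH.
case: (eqVneq j q) => [->|hjq].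
  rewrite occ_addq hn (negbTE hn) ltnn ltnSn /=; lia.
have -> : (q < j.+1) = (q < j) by rewrite ltnS leq_eqVlt eq_sym (negbTE hjq).
by rewrite occ_addj // addnAC.
Qed.

Lemma occ_lt x p M : x < 2 ^ M -> p < M -> ~~ occ x p -> x + 2 ^ p < 2 ^ M.
Proof.
move=> hx hp hn.
have eM : 2 ^ M = 2 ^ (M - p) * 2 ^ p by rewrite -expnD subnK // ltnW.
have ha : x %/ 2 ^ p < 2 ^ (M - p) by rewrite ltn_divLR ?expn_gt0 // -eM.
have hQ : ~~ odd (2 ^ (M - p)) by rewrite oddX orbF subn_eq0 -ltnNge.
have ha2 : (x %/ 2 ^ p).+1 != 2 ^ (M - p).
  apply/negP => /eqP e; move: hQ; rewrite -e oddS negbK => h; by move: hn; rewrite /occ h.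
have ha3 : (x %/ 2 ^ p).+2 <= 2 ^ (M - p).
  by rewrite ltn_neqAle ha2 ha.
have hr : x %% 2 ^ p < 2 ^ p by rewrite ltn_pmod ?expn_gt0.
have hd := divn_eq x (2 ^ p).
rewrite eM; move: ha3 hr hd; set a := x %/ 2 ^ p; set r := x %% 2 ^ p.
set P := 2 ^ p; set Q := 2 ^ (M - p) => ha3 hr hd.
nia.
Qed.

Lemma bit_exists x : 0 < x ->
  occ x (trunc_log 2 x) /\ 2 ^ trunc_log 2 x <= x /\ x < 2 ^ (trunc_log 2 x).+1.
Proof.
move=> hx; have [h1 h2] := andP (trunc_log_bounds (isT : 1 < 2) hx).
split; last by split.
rewrite /occ; set j := trunc_log 2 x in h1 h2 *.
have e : x %/ 2 ^ j = 1.
  apply/eqP; rewrite eqn_leq -ltnS ltn_divLR ?expn_gt0 // -expnS h2 /=.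
  by rewrite leq_divRL ?expn_gt0 // mul1n.
by rewrite e.
Qed.

Lemma add_eq_sub z k x : (z + k == x) = (k <= x) && (x - k == z).
Proof.
apply/eqP/andP => [<-|[h /eqP <-]]; first by rewrite leq_addl addnK.
by rewrite subnK.
Qed.

Section Mat.
Variable R : realType.
Variable M : nat.
Local Open Scope ring_scope.
Local Notation n := (2 ^ M)%N.

Definition fa (p x y : nat) : R[i] :=
  if ~~ occ x p && (x + 2 ^ p == y)%N then (-1) ^+ jw_count x p else 0.

Lemma annihE p (x y : 'I_n) : annih R M p x y = fa p x y.
Proof.
rewrite mxE /fa; case: eqP => [<-|_]; last by rewrite !andbF.
rewrite occ_addq !andbT; case h: (occ x p) => //=.
by rewrite jw_add ?h // ltnn addn0.
Qed.

Lemma adj_entry (A : 'M[R[i]]_n) x y : adj A x y = Num.conj (A y x).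
Proof. by rewrite !mxE. Qed.

Lemma creatE p (x y : 'I_n) : creat R M p x y = fa p y x.
Proof.
rewrite /creat adj_entry annihE /fa; case: ifP => _; last by rewrite rmorph0.
by rewrite rmorphXn rmorphN1.
Qed.

Lemma sum_ord_eq (w : nat) (F : nat -> R[i]) :
  \sum_(z < n) (if w == z then F z else 0) = if (w < n)%N then F w else 0.
Proof.
case: ltnP => h.
  rewrite (bigD1 (Ordinal h)) //= eqxx big1 ?addr0 // => z hz.
  case: eqP => // e; case/negP: hz; apply/eqP/val_inj => /=; by rewrite e.
by apply: big1 => z _; case: eqP => // e; move: (ltn_ord z); rewrite -e ltnNge h.
Qed.

Lemma oppE (A : 'M[R[i]]_n) x y : (- A) x y = - A x y.
Proof. by rewrite mxE. Qed.

Lemma mulE (A B : 'M[R[i]]_n) x y : (A * B) x y = \sum_z A x z * B z y.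
Proof. by rewrite -mulmxE mxE. Qed.

Lemma sum_fa_first p x (G : nat -> R[i]) :
  \sum_(z < n) fa p x z * G z =
  if (x + 2 ^ p < n)%N then fa p x (x + 2 ^ p) * G (x + 2 ^ p)%N else 0.
Proof.
rewrite -(sum_ord_eq (x + 2 ^ p) (fun z => fa p x z * G z)); apply: eq_bigr => z _.
case: eqP => [<-|/eqP hne] //.
by rewrite /fa (negbTE hne) andbF mul0r.
Qed.

Lemma sum_fa_second p (x : 'I_n) (G : nat -> R[i]) :
  \sum_(z < n) G z * fa p z x =
  if (2 ^ p <= x)%N then G (x - 2 ^ p)%N * fa p (x - 2 ^ p) x else 0.
Proof.
have -> : (2 ^ p <= x)%N = (2 ^ p <= x)%N && (x - 2 ^ p < n)%N.
  by rewrite (leq_ltn_trans (leq_subr _ _) (ltn_ord x)) andbT.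
case: (leqP (2 ^ p) x) => h /=; last first.
  apply: big1 => z _; rewrite /fa add_eq_sub leqNgt h /= andbF mulr0 //.
rewrite -(sum_ord_eq (x - 2 ^ p) (fun z => G z * fa p z x)); apply: eq_bigr => z _.
case: eqP => [<-|/eqP hne] //.
by rewrite /fa add_eq_sub h /= (negbTE hne) andbF mulr0.
Qed.

Lemma fa_self p x : fa p x (x + 2 ^ p) = if occ x p then 0 else (-1) ^+ jw_count x p.
Proof. by rewrite /fa eqxx andbT; case: (occ x p). Qed.

Lemma annih_anti p q : p != q -> (p < M)%N -> (q < M)%N ->
  annih R M p * annih R M q = - (annih R M q * annih R M p).
Proof.
move=> hpq hp hq; apply/matrixP => x y; rewrite oppE !mulE.
under eq_bigr do rewrite !annihE.
under [X in _ = - X]eq_bigr do rewrite !annihE.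
rewrite (sum_fa_first p x (fun z => fa q z y)) (sum_fa_first q x (fun z => fa p z y)) !fa_self.
case hxp: (occ x p); case hxq: (occ x q).
- by case: ifP => _; case: ifP => _; rewrite ?mul0r ?oppr0.
- rewrite mul0r if_same; case: ifP => _; last by rewrite oppr0.
  by rewrite /fa occ_addj ?hxq // hxp /= mulr0 oppr0.
- rewrite mul0r if_same oppr0.
  case: ifP => _ //; rewrite /fa occ_addj 1?eq_sym ?hxp // hxq /=. by rewrite mulr0.
have r1 := @occ_lt x p M (ltn_ord x) hp (negbT hxp).
have r2 := @occ_lt x q M (ltn_ord x) hq (negbT hxq).
rewrite r1 r2 /fa (@occ_addj x p q) 1?eq_sym ?hxp // (@occ_addj x q p) ?hxq //=.
rewrite [(x + 2 ^ q + 2 ^ p)%N]addnAC.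
rewrite hxp /=; case: eqP => e1; case: eqP => e2; rewrite ?mulr0 ?oppr0 //; try (exfalso; apply: e2; by rewrite e1); try (exfalso; apply: e1; by rewrite e2).
rewrite !jw_add ?hxp ?hxq // !exprD.
case: (ltngtP p q) hpq => // h _; rewrite /= ?expr1 ?expr0.
  all: set a := (-1) ^+ jw_count x p; set b := (-1) ^+ jw_count x q; ring.
Qed.


Lemma sub_add_occ y p : occ y p -> y = (y - 2 ^ p + 2 ^ p)%N /\ ~~ occ (y - 2 ^ p) p.
Proof.
move=> h; have e : y = (y - 2 ^ p + 2 ^ p)%N by rewrite subnK // occ_ge.
split=> //; by rewrite -occ_addq -e.
Qed.
Arguments sub_add_occ {y p}.

Lemma annih_creat_anti p q : p != q -> (p < M)%N -> (q < M)%N ->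
  annih R M p * creat R M q = - (creat R M q * annih R M p).
Proof.
move=> hpq hp hq; apply/matrixP => x y; rewrite oppE !mulE.
under eq_bigr do rewrite annihE creatE.
under [X in _ = - X]eq_bigr do rewrite creatE annihE.
rewrite (sum_fa_first p x (fun z => fa q y z)) (sum_fa_second p y (fun z => fa q z x)).
case hyp: (occ y p); last first.
  have -> : (if (2 ^ p <= y)%N then fa q (y - 2 ^ p) x * fa p (y - 2 ^ p) y else 0) = 0.
    case: ifP => // hle; rewrite {2}/fa subnK // eqxx andbT.
    have : occ (y - 2 ^ p + 2 ^ p) p = false by rewrite subnK.
    by rewrite occ_addq => /negbFE ->; rewrite mulr0.
  rewrite oppr0; case: ifP => // _; rewrite /fa eqxx andbT.
  case hxp: (occ x p) => /=; first by rewrite mul0r.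
  case hyq: (occ y q) => /=; first by rewrite mulr0.
  case: eqP => e; last by rewrite mulr0.
  have : occ (y + 2 ^ q) p = occ (x + 2 ^ p) p by rewrite e.
  by rewrite occ_addq occ_addj ?hyq ?hyp ?hxp.
have [e hz] := sub_add_occ hyp.
move: e hz; set z := (y - 2 ^ p)%N => e hz.
rewrite (occ_ge _ _ hyp).
have -> : fa p z y = (-1) ^+ jw_count z p by rewrite /fa hz -e eqxx.
case hzq: (occ z q).
  have -> : fa q z x = 0 by rewrite /fa hzq.
  have -> : fa q y (x + 2 ^ p) = 0 by rewrite /fa e (@occ_addj z p q) 1?eq_sym // hzq.
  by rewrite mul0r mulr0 oppr0 if_same.
have hyq : occ y q = false by rewrite e (@occ_addj z p q) 1?eq_sym // hzq.
have -> : fa q z x = if (z + 2 ^ q == x)%N then (-1) ^+ jw_count z q else 0.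
  by rewrite /fa hzq.
case ex: (z + 2 ^ q == x)%N; last first.
  have -> : fa q y (x + 2 ^ p) = 0.
    by rewrite /fa hyq /= e addnAC eqn_add2r ex.
  by rewrite mul0r mulr0 oppr0 if_same.
move/eqP: ex => ex.
have hxp : occ x p = false by rewrite -ex (@occ_addj z q p) ?hzq // (negbTE hz).
have r1 := @occ_lt x p M (ltn_ord x) hp (negbT hxp).
rewrite r1 /fa eqxx hxp hyq /= e addnAC -ex eqxx /=.
rewrite !jw_add ?hz ?(negbT hzq) // !exprD.
case: (ltngtP p q) hpq => // h _; rewrite /= ?expr1 ?expr0.
all: set a := (-1) ^+ jw_count z p; set b := (-1) ^+ jw_count z q; ring.
Qed.


Lemma adjN (A : 'M[R[i]]_n) : adj (- A) = - adj A.
Proof. by apply/matrixP => x y; rewrite !mxE rmorphN. Qed.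
Lemma adjM' (A B : 'M[R[i]]_n) : adj (A * B) = adj B * adj A.
Proof.
apply/matrixP => x y; rewrite adj_entry !mulE rmorph_sum.
by apply: eq_bigr => z _; rewrite !adj_entry rmorphM mulrC.
Qed.

Lemma creat_anti p q : p != q -> (p < M)%N -> (q < M)%N ->
  creat R M p * creat R M q = - (creat R M q * creat R M p).
Proof.
move=> hpq hp hq; rewrite /creat -adjM' (@annih_anti q p) 1?eq_sym //.
by rewrite adjN adjM'.
Qed.

Definition lad (p : nat) (b : bool) : 'M[R[i]]_n :=
  if b then creat R M p else annih R M p.

Lemma lad_anti p q b b' : p != q -> (p < M)%N -> (q < M)%N ->
  lad p b * lad q b' = - (lad q b' * lad p b).
Proof.
move=> hpq hp hq; case: b; case: b'; rewrite /lad.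
- exact: creat_anti.
- by rewrite (@annih_creat_anti q p) 1?eq_sym // opprK.
- exact: annih_creat_anti.
- exact: annih_anti.
Qed.


Definition Emx (x y : nat) : 'M[R[i]]_n :=
  \matrix_(u, v) ((((u : nat) == x) && ((v : nat) == y))%:R).

Lemma EmxE x y (u v : 'I_n) : Emx x y u v = (((u : nat) == x) && ((v : nat) == y))%:R.
Proof. by rewrite /Emx mxE. Qed.

Lemma sum_pick (z : nat) (F : nat -> R[i]) :
  \sum_(w < n) (if (w : nat) == z then F w else 0) = if (z < n)%N then F z else 0.
Proof.
rewrite -sum_ord_eq; apply: eq_bigr => w _; rewrite eq_sym.
by case: eqP => // ->.
Qed.

Lemma diag_ac i (u v : 'I_n) : (i < M)%N ->
  (annih R M i * creat R M i) u v = (((u : nat) == v) && ~~ occ u i)%:R.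
Proof.
move=> hi; rewrite mulE.
under eq_bigr do rewrite annihE creatE.
rewrite (sum_fa_first i u (fun z => fa i v z)) fa_self.
case hu: (occ u i) => /=; first by rewrite mul0r if_same andbF.
rewrite (@occ_lt u i M (ltn_ord u) hi (negbT hu)) andbT /fa eqn_add2r.
rewrite [(v : nat) == u]eq_sym.
case: eqP => [<-|_]; rewrite ?hu /= ?andbF ?mulr0 //.
by rewrite -expr2 exprAC sqrrN expr1n expr1n.
Qed.

Lemma prod_diag (r : seq nat) (u v : 'I_n) : (forall i, i \in r -> (i < M)%N) ->
  (\prod_(i <- r) (annih R M i * creat R M i)) u v =
  (((u : nat) == v) && all (fun i => ~~ occ u i) r)%:R.
Proof.
elim: r u v => [|i r IH] u v hr.
  by rewrite big_nil !mxE andbT.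
rewrite big_cons mulE.
have -> : \sum_(z < n) (annih R M i * creat R M i) u z *
           (\prod_(j <- r) (annih R M j * creat R M j)) z v =
         \sum_(z < n) (if (z : nat) == u then
           ((~~ occ u i) * ((u == v :> nat) && all (fun j => ~~ occ u j) r))%:R
           else 0).
  apply: eq_bigr => z _; rewrite diag_ac ?hr ?mem_head // IH; last first.
    by move=> j hj; apply: hr; rewrite inE hj orbT.
  rewrite [(u : nat) == z]eq_sym natrM; case: eqP => [->|_] //; by rewrite mul0r.
rewrite (sum_pick u (fun=> _)) ltn_ord; congr (_ %:R).
by rewrite /=; case: (occ u i); case: (_ == _); case: (all _ _).
Qed.


Lemma all_occ0 (u : 'I_n) : all (fun i => ~~ occ u i) (iota 0 M) = ((u : nat) == 0%N).
Proof.
case: (posnP u) => [->|hu].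
  by rewrite ?eqxx; apply/allP => i _; rewrite /occ div0n.
have [h1 [h2 h3]] := @bit_exists u hu.
have hj : (trunc_log 2 u < M)%N.
  by rewrite -(ltn_exp2l _ _ (isT : (1 < 2)%N)); exact: leq_ltn_trans h2 (ltn_ord u).
apply/allP => H.
have hm : trunc_log 2 u \in iota 0 M by rewrite mem_iota /= add0n hj.
by move: (H _ hm); rewrite h1.
Qed.

Lemma E00 : \prod_(i <- iota 0 M) (annih R M i * creat R M i) = Emx 0 0.
Proof.
apply/matrixP => u v; rewrite prod_diag; last by move=> i; rewrite mem_iota.
rewrite all_occ0 EmxE; congr (_ %:R); congr nat_of_bool.
rewrite andbC; case: eqP => [-> | _] //=; by rewrite eq_sym.
Qed.

Lemma scaleE c (A : 'M[R[i]]_n) u v : (c *: A) u v = c * A u v.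
Proof. by rewrite mxE. Qed.

Lemma Ex0_step j z : ~~ occ z j -> (z + 2 ^ j < n)%N ->
  creat R M j * Emx z 0 = (-1) ^+ jw_count z j *: Emx (z + 2 ^ j) 0.
Proof.
move=> hz hr; apply/matrixP => u v; rewrite scaleE EmxE mulE.
have -> : \sum_(w < n) creat R M j u w * Emx z 0 w v =
   \sum_(w < n) (if (w : nat) == z then fa j w u * ((v : nat) == 0%N)%:R else 0).
  apply: eq_bigr => w _; rewrite creatE EmxE.
  by case: eqP => _ //=; rewrite mulr0.
rewrite (sum_pick z (fun w => fa j w u * _)) (leq_ltn_trans (leq_addr _ _) hr).
rewrite /fa hz /= [(u : nat) == _]eq_sym.
by case: eqP => _; case: eqP => _; rewrite /= ?mulr1 ?mulr0 ?mul0r.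
Qed.

Lemma E0x_step j z : ~~ occ z j -> (z + 2 ^ j < n)%N ->
  Emx 0 z * annih R M j = (-1) ^+ jw_count z j *: Emx 0 (z + 2 ^ j).
Proof.
move=> hz hr; apply/matrixP => u v; rewrite scaleE EmxE mulE.
have -> : \sum_(w < n) Emx 0 z u w * annih R M j w v =
   \sum_(w < n) (if (w : nat) == z then ((u : nat) == 0%N)%:R * fa j w v else 0).
  apply: eq_bigr => w _; rewrite annihE EmxE.
  by case: ((w : nat) =P z) => _; rewrite /= ?andbT ?andbF ?mulr0n ?mul0r.
rewrite (sum_pick z (fun w => ((u : nat) == 0%N)%:R * fa j w v)) (leq_ltn_trans (leq_addr _ _) hr).
rewrite /fa hz /=.
rewrite [_ == (v : nat)]eq_sym; case: ((u : nat) =P 0%N) => _; case: ((v : nat) =P (z + 2 ^ j)%N) => _; by rewrite /= ?mulr1n ?mul1r ?mulr1 ?mulr0n ?mul0r ?mulr0.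
Qed.

Lemma Exy x y : (x < n)%N -> (y < n)%N -> Emx x y = Emx x 0 * Emx 0 y.
Proof.
move=> hx hy; apply/matrixP => u v; rewrite mulE EmxE.
have -> : \sum_(w < n) Emx x 0 u w * Emx 0 y w v =
   \sum_(w < n) (if (w : nat) == 0%N then (((u : nat) == x) && ((v : nat) == y))%:R else 0).
  apply: eq_bigr => w _; rewrite !EmxE.
  case: eqP => _; case: eqP => _; case: eqP => _; by rewrite /= ?mulr1 ?mulr0 ?mul0r ?mul1r.
by rewrite (sum_pick 0 (fun=> _)) expn_gt0.
Qed.

Lemma mx_decomp (O : 'M[R[i]]_n) : O = \sum_(x < n) \sum_(y < n) O x y *: Emx x y.
Proof.
apply/matrixP => u v.
have h1 : forall x : 'I_n, x != u -> (\sum_(y < n) O x y *: Emx x y) u v = 0.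
  move=> x hx; rewrite summxE; apply: big1 => y _; rewrite scaleE EmxE.
  rewrite [(u : nat) == x](_ : _ = false) ?mulr0 //.
  by apply/negP => /eqP /val_inj e; rewrite e eqxx in hx.
have h2 : (\sum_(y < n) O u y *: Emx u y) u v = O u v.
  rewrite summxE (bigD1 v) //= big1 ?addr0; first by rewrite scaleE EmxE !eqxx mulr1.
  move=> y hy; rewrite scaleE EmxE.
  rewrite [(v : nat) == y](_ : _ = false) ?andbF ?mulr0 //.
  by apply/negP => /eqP /val_inj e; rewrite e eqxx in hy.
rewrite summxE (bigD1 u) //= h2 big1 ?addr0 //.
Qed.

Lemma sign_sq k : ((-1) ^+ k * (-1) ^+ k : R[i]) = 1.
Proof. by rewrite -expr2 exprAC sqrrN !expr1n. Qed.

Lemma ssign k (A : 'M[R[i]]_n) : (-1) ^+ k *: ((-1) ^+ k *: A) = A.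
Proof. by rewrite scalerA sign_sq scale1r. Qed.

Section Gen.
Variable Q : 'M[R[i]]_n -> Prop.
Hypotheses (Q0 : Q 0) (Q1 : Q 1)
  (QD : forall A B, Q A -> Q B -> Q (A + B))
  (QZ : forall c A, Q A -> Q (c *: A))
  (QM : forall A B, Q A -> Q B -> Q (A * B))
  (Qa : forall i, (i < M)%N -> Q (annih R M i))
  (Qc : forall i, (i < M)%N -> Q (creat R M i)).

Lemma Q_E00 : Q (Emx 0 0).
Proof.
rewrite -E00 big_seq; apply: big_ind => // i; rewrite mem_iota /= add0n => hi.
by apply: QM; [apply: Qa | apply: Qc].
Qed.

Lemma decomp_bit x : (0 < x)%N -> (x < n)%N ->
  exists j z, [/\ (j < M)%N, x = (z + 2 ^ j)%N, ~~ occ z j & (z < x)%N].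
Proof.
move=> hx0 hxn; have [h1 [h2 h3]] := @bit_exists x hx0.
set j := trunc_log 2 x in h1 h2 h3.
exists j, (x - 2 ^ j)%N; split.
- by rewrite -(ltn_exp2l _ _ (isT : (1 < 2)%N)); exact: leq_ltn_trans h2 hxn.
- by rewrite subnK.
- by rewrite -occ_addq subnK.
- by rewrite ltn_subrL expn_gt0 hx0.
Qed.

Lemma Q_Ex0 k x : (x <= k)%N -> (x < n)%N -> Q (Emx x 0).
Proof.
elim: k x => [|k IH] x hxk hxn.
  by move: hxk; rewrite leqn0 => /eqP ->; exact: Q_E00.
case: (leqP x k) => h; first exact: IH.
have hx0 : (0 < x)%N by apply: leq_ltn_trans h.
have [j [z [hj ex hz hzx]]] := @decomp_bit x hx0 hxn.
have hr : (z + 2 ^ j < n)%N by rewrite -ex.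
have st := @Ex0_step j z hz hr.
rewrite ex -(ssign (jw_count z j) (Emx _ 0)) -st.
apply: QZ; apply: QM; first exact: Qc.
apply: IH; [by rewrite -ltnS (leq_trans hzx) | exact: ltn_trans hzx hxn].
Qed.

Lemma Q_E0x k x : (x <= k)%N -> (x < n)%N -> Q (Emx 0 x).
Proof.
elim: k x => [|k IH] x hxk hxn.
  by move: hxk; rewrite leqn0 => /eqP ->; exact: Q_E00.
case: (leqP x k) => h; first exact: IH.
have hx0 : (0 < x)%N by apply: leq_ltn_trans h.
have [j [z [hj ex hz hzx]]] := @decomp_bit x hx0 hxn.
have hr : (z + 2 ^ j < n)%N by rewrite -ex.
have st := @E0x_step j z hz hr.
rewrite ex -(ssign (jw_count z j) (Emx 0 _)) -st.
apply: QZ; apply: QM; last exact: Qa.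
apply: IH; [by rewrite -ltnS (leq_trans hzx) | exact: ltn_trans hzx hxn].
Qed.

Lemma Q_all (O : 'M[R[i]]_n) : Q O.
Proof.
rewrite (mx_decomp O); apply: big_ind => // x _; apply: big_ind => // y _.
apply: QZ; rewrite (@Exy x y (ltn_ord x) (ltn_ord y)); apply: QM.
  exact: (@Q_Ex0 x x (leqnn x) (ltn_ord x)).
exact: (@Q_E0x y y (leqnn y) (ltn_ord y)).
Qed.

End Gen.

End Mat.


Section Ana.
Variable R : realType.
Local Open Scope ring_scope.
Local Open Scope complex_scope.

Lemma creD (x y : R[i]) : cre (x + y) = cre x + cre y.
Proof. by case: x; case: y. Qed.
Lemma cimD (x y : R[i]) : cim (x + y) = cim x + cim y.
Proof. by case: x; case: y. Qed.
Lemma creM (x y : R[i]) : cre (x * y) = cre x * cre y - cim x * cim y.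
Proof. by case: x; case: y. Qed.
Lemma cimM (x y : R[i]) : cim (x * y) = cre x * cim y + cim x * cre y.
Proof. by case: x => a b; case: y => c d /=. Qed.
Lemma cre0 : cre (0 : R[i]) = 0. Proof. by []. Qed.
Lemma cim0 : cim (0 : R[i]) = 0. Proof. by []. Qed.

Definition ccvg (u : nat -> R[i]) (l : R[i]) :=
  ((fun m => cre (u m)) @ \oo --> cre l)%classic /\
  ((fun m => cim (u m)) @ \oo --> cim l)%classic.

Lemma ccvg_lim u l : ccvg u l -> clim u = l.
Proof.
case=> h1 h2; rewrite /clim (cvg_lim _ h1) // (cvg_lim _ h2) //.
by case: l {h1 h2}.
Qed.

Lemma ccvg_cst (c : R[i]) : ccvg (fun=> c) c.
Proof. by split; apply: cvg_cst. Qed.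

Lemma ccvgD u v a b : ccvg u a -> ccvg v b ->
  ccvg (fun m => u m + v m) (a + b).
Proof.
case=> h1 h2 [h3 h4]; split.
  have -> : (fun m => cre (u m + v m)) = (fun m => cre (u m)) + (fun m => cre (v m)).
    by apply: boolp.funext => m /=; rewrite creD.
  by rewrite creD; apply: cvgD.
have -> : (fun m => cim (u m + v m)) = (fun m => cim (u m)) + (fun m => cim (v m)).
  by apply: boolp.funext => m /=; rewrite cimD.
by rewrite cimD; apply: cvgD.
Qed.

Lemma ccvgMl c u a : ccvg u a -> ccvg (fun m => c * u m) (c * a).
Proof.
case=> h1 h2; split.
  have -> : (fun m => cre (c * u m)) =
     (fun m => cre c * cre (u m)) - (fun m => cim c * cim (u m)).
    by apply: boolp.funext => m /=; rewrite creM.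
  by rewrite creM; apply: cvgB; apply: cvgMl_tmp.
have -> : (fun m => cim (c * u m)) =
   (fun m => cre c * cim (u m)) + (fun m => cim c * cre (u m)).
  by apply: boolp.funext => m /=; rewrite cimM.
by rewrite cimM; apply: cvgD; apply: cvgMl_tmp.
Qed.

Lemma ccvg_sum (I : Type) (r : seq I) (u : I -> nat -> R[i]) (a : I -> R[i]) :
  (forall i, ccvg (u i) (a i)) ->
  ccvg (fun m => \sum_(i <- r) u i m) (\sum_(i <- r) a i).
Proof.
move=> h; elim: r => [|i r IH].
  rewrite big_nil; have -> : (fun m : nat => \sum_(i <- [::]) u i m) = fun=> 0.
    by apply: boolp.funext => m; rewrite big_nil.
  exact: ccvg_cst.
rewrite big_cons.
have -> : (fun m => \sum_(j <- i :: r) u j m) =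
   (fun m => u i m + \sum_(j <- r) u j m).
  by apply: boolp.funext => m; rewrite big_cons.
exact: ccvgD.
Qed.


Definition l1 (z : R[i]) := `|cre z| + `|cim z|.

Lemma l1_ge0 z : 0 <= l1 z.
Proof. by rewrite /l1 addr_ge0. Qed.

Lemma l1D x y : l1 (x + y) <= l1 x + l1 y.
Proof.
rewrite /l1 creD cimD.
have h1 := ler_normD (cre x) (cre y); have h2 := ler_normD (cim x) (cim y).
lra.
Qed.

Lemma l1M x y : l1 (x * y) <= l1 x * l1 y.
Proof.
rewrite /l1 creM cimM.
have h1 : `|cre x * cre y - cim x * cim y| <= `|cre x| * `|cre y| + `|cim x| * `|cim y|.
  by rewrite -!normrM -(normrN (cim x * cim y)) ler_normD.
have h2 : `|cre x * cim y + cim x * cre y| <= `|cre x| * `|cim y| + `|cim x| * `|cre y|.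
  by rewrite -!normrM ler_normD.
rewrite mulrDl !mulrDr; lra.
Qed.

Lemma l1_sum (I : Type) (r : seq I) (f : I -> R[i]) :
  l1 (\sum_(i <- r) f i) <= \sum_(i <- r) l1 (f i).
Proof.
elim: r => [|i r IH]; first by rewrite !big_nil /l1 /= normr0 addr0.
rewrite !big_cons; apply: le_trans (l1D _ _) _; exact: lerD.
Qed.

Lemma l1_1 n (x y : 'I_n) : l1 ((1 : 'M[R[i]]_n) x y) <= 1.
Proof.
rewrite !mxE; case: (x == y) => /=; rewrite /l1 /=.
  by rewrite normr1 normr0 addr0.
by rewrite normr0 addr0.
Qed.

Definition mxb n (A : 'M[R[i]]_n) := \sum_x \sum_y l1 (A x y).

Arguments mxb {n}.
Lemma mxb_ge0 n (A : 'M[R[i]]_n) : 0 <= mxb A.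
Proof. by apply: sumr_ge0 => x _; apply: sumr_ge0 => y _; apply: l1_ge0. Qed.

Lemma l1_pow n (A : 'M[R[i]]_n) k x y : l1 ((A ^+ k) x y) <= mxb A ^+ k.
Proof.
elim: k x y => [|k IH] x y; first by rewrite expr0 l1_1.
rewrite exprS -mulmxE mxE.
apply: le_trans (l1_sum _ _ _) _.
apply: (@le_trans _ _ (\sum_z l1 (A x z) * mxb A ^+ k)).
  apply: ler_sum => z _; apply: le_trans (l1M _ _) _.
  by apply: ler_wpM2l; [exact: l1_ge0 | exact: IH].
rewrite -mulr_suml exprS ler_wpM2r ?exprn_ge0 ?mxb_ge0 //.
rewrite /mxb [X in _ <= X](bigD1 x) //= lerDl.
by apply: sumr_ge0 => x' _; apply: sumr_ge0 => y' _; apply: l1_ge0.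
Qed.


Definition Sm n (A : 'M[R[i]]_n) m := \sum_(k < m) ((k`!)%:R^-1 *: A ^+ k).
Arguments Sm {n}.

Lemma expmE n (A : 'M[R[i]]_n) x y : expm A x y = clim (fun m => Sm A m x y).
Proof.
rewrite /expm mxE; congr clim; apply: boolp.funext => m.
by rewrite /Sm summxE; apply: eq_bigr => k _; rewrite mxE mulrC.
Qed.

Lemma cre_sum (I : Type) (r : seq I) (f : I -> R[i]) :
  cre (\sum_(i <- r) f i) = \sum_(i <- r) cre (f i).
Proof. by elim: r => [|i r IH]; rewrite ?big_nil // !big_cons creD IH. Qed.
Lemma cim_sum (I : Type) (r : seq I) (f : I -> R[i]) :
  cim (\sum_(i <- r) f i) = \sum_(i <- r) cim (f i).
Proof. by elim: r => [|i r IH]; rewrite ?big_nil // !big_cons cimD IH. Qed.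

Lemma invnatC (k : nat) : (k%:R : R[i])^-1 = ((k%:R : R)^-1)%:C.
Proof. by rewrite -(rmorph_nat (real_complex R)) -fmorphV. Qed.

Lemma cre_realM (r : R) z : cre (r%:C * z) = r * cre z.
Proof. by case: z => a b /=; rewrite mul0r subr0. Qed.
Lemma cim_realM (r : R) z : cim (r%:C * z) = r * cim z.
Proof. by case: z => a b /=; rewrite mul0r addr0. Qed.

Lemma exp_series_cvg (g : nat -> R) (b : R) : 0 <= b ->
  (forall k, `|g k| <= b ^+ k) ->
  cvgn (series (fun k => (k`!%:R)^-1 * g k)).
Proof.
move=> b0 hg; apply: normed_cvg.
apply: (@series_le_cvg _ _ (exp_coeff b)).
- by move=> k /=.
- by move=> k; apply: exp_coeff_ge0.
- move=> k /=; rewrite exp_coeffE /= normrM ger0_norm ?invr_ge0 ?ler0n //.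
  by apply: ler_wpM2l; [rewrite invr_ge0 ler0n | exact: hg].
exact: is_cvg_series_exp_coeff.
Qed.

Lemma Sm_cvg n (A : 'M[R[i]]_n) x y : ccvg (fun m => Sm A m x y) (expm A x y).
Proof.
have hre : (fun m => cre (Sm A m x y)) =
    series (fun k => (k`!%:R)^-1 * cre ((A ^+ k) x y)).
  apply: boolp.funext => m; rewrite /series /= big_mkord /Sm summxE cre_sum.
  by apply: eq_bigr => k _; rewrite mxE invnatC cre_realM.
have him : (fun m => cim (Sm A m x y)) =
    series (fun k => (k`!%:R)^-1 * cim ((A ^+ k) x y)).
  apply: boolp.funext => m; rewrite /series /= big_mkord /Sm summxE cim_sum.
  by apply: eq_bigr => k _; rewrite mxE invnatC cim_realM.
have c1 : cvgn (fun m => cre (Sm A m x y)).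
  have h := @exp_series_cvg (fun k => cre ((A ^+ k) x y)) _ (@mxb_ge0 n A).
  rewrite hre; apply: h => k.
  by apply: le_trans (@l1_pow n A k x y); rewrite /l1 lerDl.
have c2 : cvgn (fun m => cim (Sm A m x y)).
  have h := @exp_series_cvg (fun k => cim ((A ^+ k) x y)) _ (@mxb_ge0 n A).
  rewrite him; apply: h => k.
  by apply: le_trans (@l1_pow n A k x y); rewrite /l1 lerDr.
rewrite expmE /clim /ccvg /=; split; [exact: c1 | exact: c2].
Qed.


Lemma expm_comm n (A X : 'M[R[i]]_n) : X * A = A * X -> X * expm A = expm A * X.
Proof.
move=> hXA.
have hS : forall m, X * Sm A m = Sm A m * X.
  move=> m; rewrite /Sm mulr_sumr mulr_suml; apply: eq_bigr => k _.
  rewrite -!mulmxE -scalemxAl -scalemxAr !mulmxE; congr (_ *: _).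
  by apply: commrX.
apply/matrixP => x y; rewrite -!mulmxE !mxE.
transitivity (clim (fun m => (X * Sm A m) x y)).
  symmetry; apply: ccvg_lim.
  have -> : (fun m => (X * Sm A m) x y) = (fun m => \sum_z X x z * Sm A m z y).
    by apply: boolp.funext => m; rewrite -mulmxE mxE.
  by apply: ccvg_sum => z; apply: ccvgMl; apply: Sm_cvg.
apply: ccvg_lim.
have -> : (fun m => (X * Sm A m) x y) = (fun m => \sum_z X z y * Sm A m x z).
  apply: boolp.funext => m; rewrite hS -mulmxE mxE.
  by apply: eq_bigr => z _; rewrite mulrC.
have -> : \sum_z expm A x z * X z y = \sum_z X z y * expm A x z.
  by apply: eq_bigr => z _; rewrite mulrC.
by apply: ccvg_sum => z; apply: ccvgMl; apply: Sm_cvg.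
Qed.

Lemma ccvg_conj u l : ccvg u l -> ccvg (fun m => Num.conj (u m)) (Num.conj l).
Proof.
case=> h1 h2; split.
  have -> : (fun m => cre (Num.conj (u m))) = (fun m => cre (u m)).
    by apply: boolp.funext => m; case: (u m).
  by case: l h1 h2 => a b h1 h2 /=.
have -> : (fun m => cim (Num.conj (u m))) = (fun m => - cim (u m)).
  by apply: boolp.funext => m; case: (u m).
by case: l h1 h2 => a b h1 h2 /=; apply: (cvgN h2).
Qed.

Lemma adjD n (A B : 'M[R[i]]_n) : adj (A + B) = adj A + adj B.
Proof. by apply/matrixP => x y; rewrite !mxE rmorphD. Qed.
Lemma adj0 n : adj (0 : 'M[R[i]]_n) = 0.
Proof. by apply/matrixP => x y; rewrite !mxE rmorph0. Qed.
Lemma adjZ n c (A : 'M[R[i]]_n) : adj (c *: A) = Num.conj c *: adj A.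
Proof. by apply/matrixP => x y; rewrite !mxE rmorphM. Qed.
Lemma adjM n (A B : 'M[R[i]]_n) : adj (A * B) = adj B * adj A.
Proof.
apply/matrixP => x y; rewrite -!mulmxE !mxE rmorph_sum.
by apply: eq_bigr => z _; rewrite !mxE rmorphM mulrC.
Qed.
Lemma adj1 n : adj (1 : 'M[R[i]]_n) = 1.
Proof. by apply/matrixP => x y; rewrite !mxE conjC_nat eq_sym. Qed.
Lemma adjK n (A : 'M[R[i]]_n) : adj (adj A) = A.
Proof. by apply/matrixP => x y; rewrite !mxE conjCK. Qed.
Lemma adj_sum n (I : Type) (r : seq I) (F : I -> 'M[R[i]]_n) :
  adj (\sum_(i <- r) F i) = \sum_(i <- r) adj (F i).
Proof. by elim: r => [|i r IH]; rewrite ?big_nil ?adj0 // !big_cons adjD IH. Qed.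
Lemma adjX n (A : 'M[R[i]]_n) k : adj (A ^+ k) = adj A ^+ k.
Proof.
elim: k => [|k IH]; first by rewrite !expr0 adj1.
by rewrite exprS adjM IH exprSr.
Qed.

Lemma adjSm n (A : 'M[R[i]]_n) m : adj (Sm A m) = Sm (adj A) m.
Proof.
rewrite /Sm adj_sum; apply: eq_bigr => k _.
have hu : (k`!%:R : R[i]) \is a GRing.unit.
  by rewrite unitfE pnatr_eq0 -lt0n fact_gt0.
by rewrite adjZ adjX fmorphV rmorph_nat.
Qed.

Lemma adj_expm n (A : 'M[R[i]]_n) : adj (expm A) = expm (adj A).
Proof.
apply/matrixP => x y.
rewrite [RHS](@expmE n (adj A) x y).
have -> : adj (expm A) x y = Num.conj (expm A y x) by rewrite !mxE.
symmetry; apply: ccvg_lim.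
have -> : (fun m => Sm (adj A) m x y) = (fun m => Num.conj (Sm A m y x)).
  apply: boolp.funext => m.
  by rewrite -adjSm mxE mxE.
by apply: ccvg_conj; apply: Sm_cvg.
Qed.

End Ana.

Local Open Scope ring_scope.

Section Ring.
Variable T : pzRingType.

Lemma prod_anti (I : Type) (r : seq I) (F : I -> T) (Y : T) :
  (forall x, F x * Y = - (Y * F x)) ->
  (\prod_(x <- r) F x) * Y = (-1) ^+ size r * (Y * \prod_(x <- r) F x).
Proof.
move=> hF; elim: r => [|x r IH] /=; first by rewrite big_nil mul1r mulr1 expr0 mul1r.
rewrite big_cons -mulrA IH exprS [F x * _]mulrA (commr_sign (F x)) -mulrA [F x * (Y * _)]mulrA hF.
by rewrite mulN1r mulNr mulNr mulrN !mulrA.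
Qed.

Lemma tele (I : eqType) (r : seq I) (U O V : I -> T) :
  uniq r ->
  (forall s t, s \in r -> t \in r -> s != t ->
     [/\ U s * O t = O t * U s, V t * U s = U s * V t,
         V t * O s = O s * V t & V t * V s = V s * V t]) ->
  (\prod_(t <- r) U t) * (\prod_(t <- r) O t) * (\prod_(t <- rev r) V t) =
  \prod_(t <- r) (U t * O t * V t).
Proof.
elim: r => [|t r IH] /=; first by rewrite !big_nil !mulr1.
move=> /andP [ht hu] hc.
have hc' : forall s u, s \in r -> u \in r -> s != u ->
     [/\ U s * O u = O u * U s, V u * U s = U s * V u,
         V u * O s = O s * V u & V u * V s = V s * V u].
  by move=> s u hs hu' hsu; apply: hc; rewrite ?inE ?hs ?hu' ?orbT.
have hst : forall s, s \in r -> s != t.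
  by move=> s hs; apply: contraNneq ht => <-.
rewrite rev_cons big_rcons /= !big_cons -(IH hu hc').
have hin : forall s, s \in r -> s \in t :: r by move=> s hs; rewrite inE hs orbT.
have cin : forall (F : I -> T) x (l : seq I), (forall i, i \in l -> GRing.comm x (F i)) ->
    GRing.comm x (\prod_(i <- l) F i).
  by move=> F x l h; rewrite big_seq; apply: commr_prod.
have c1 : GRing.comm (O t) (\prod_(s <- r) U s).
  apply: cin => s hs; have [h1 _ _ _] := hc s t (hin s hs) (mem_head _ _) (hst s hs).
  by rewrite /GRing.comm h1.
have c2 : GRing.comm (V t) ((\prod_(s <- r) U s) * (\prod_(s <- r) O s) * (\prod_(s <- rev r) V s)).
  apply: commrM; first apply: commrM.
  - apply: cin => s hs; have [_ h2 _ _] := hc s t (hin s hs) (mem_head _ _) (hst s hs).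
    exact: h2.
  - apply: cin => s hs; have [_ _ h3 _] := hc s t (hin s hs) (mem_head _ _) (hst s hs).
    exact: h3.
  - apply: cin => s; rewrite mem_rev => hs.
    have [_ _ _ h4] := hc s t (hin s hs) (mem_head _ _) (hst s hs).
    exact: h4.
set PU := \prod_(s <- r) U s in c1 c2 *.
set PO := \prod_(s <- r) O s in c2 *.
set PV := \prod_(s <- rev r) V s in c2 *.
rewrite -[U t * O t * V t * _]mulrA c2 !mulrA.
by rewrite -[U t * PU * O t]mulrA -c1 !mulrA.
Qed.

End Ring.

Lemma adj_prod (R : realType) (m : nat) (I : Type) (r : seq I) (F : I -> 'M[R[i]]_m) :
  adj (\prod_(t <- r) F t) = \prod_(t <- rev r) adj (F t).
Proof.
elim: r => [|t r IH]; first by rewrite !big_nil adj1.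
by rewrite big_cons adjM IH rev_cons big_rcons.
Qed.


Section Main.
Variables (R : realType) (N L : nat).

Lemma scaleMl m c (A B : 'M[R[i]]_m) : (c *: A) * B = c *: (A * B).
Proof. by rewrite -!mulmxE scalemxAl. Qed.
Lemma scaleMr m c (A B : 'M[R[i]]_m) : A * (c *: B) = c *: (A * B).
Proof. by rewrite -!mulmxE scalemxAr. Qed.

Section Hom.
Variables (t : nat) (phi : fop R L -> fop R (N * L)).
Hypothesis h : slice_hom R N L t phi.

Lemma phiD A B : phi (A + B) = phi A + phi B.
Proof. by case: h => hl _ _ _ _; have := hl 1 A B; rewrite !scale1r. Qed.

Lemma phi0 : phi 0 = 0.
Proof.
have e := phiD 0 0; rewrite addr0 in e.
by move: (congr1 (fun x => x - phi 0) e); rewrite /= subrr addrK.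
Qed.

Lemma phiZ c A : phi (c *: A) = c *: phi A.
Proof. by case: h => hl _ _ _ _; rewrite -[c *: A]addr0 hl phi0 addr0. Qed.

Lemma phiM A B : phi (A * B) = phi A * phi B.
Proof. by case: h. Qed.

Lemma phi1 : phi 1 = 1.
Proof. by case: h. Qed.

Lemma phi_adj A : phi (adj A) = adj (phi A).
Proof. by case: h. Qed.

Lemma phi_annih i : (i < L)%N -> phi (annih R L i) = lad R (N * L) (t * L + i) false.
Proof. by case: h => _ _ _ _ ha; move/ha. Qed.

Lemma phi_creat i : (i < L)%N -> phi (creat R L i) = lad R (N * L) (t * L + i) true.
Proof. by move=> hi; rewrite /creat phi_adj phi_annih. Qed.

Lemma phi_ladder (l : 'I_L * bool) : phi (ladder R L l) = lad R (N * L) (t * L + l.1) l.2.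
Proof.
rewrite /ladder; case: l => i b /=; case: b.
  exact: phi_creat.
exact: phi_annih.
Qed.

Lemma phi_monomial w : phi (monomial R L w) = \prod_(l <- w) lad R (N * L) (t * L + l.1) l.2.
Proof.
rewrite /monomial; elim: w => [|l w IH]; first by rewrite !big_nil phi1.
by rewrite !big_cons phiM IH phi_ladder.
Qed.

Lemma phi_sum (I : Type) (r : seq I) (F : I -> fop R L) :
  phi (\sum_(i <- r) F i) = \sum_(i <- r) phi (F i).
Proof. by elim: r => [|i r IH]; rewrite ?big_nil ?phi0 // !big_cons phiD IH. Qed.

End Hom.

Lemma mode_lt (t i : nat) : (t < N)%N -> (i < L)%N -> (t * L + i < N * L)%N.
Proof. move=> ht hi; nia. Qed.

Lemma mode_neq (s t i j : nat) : s != t -> (i < L)%N -> (j < L)%N -> s * L + i != t * L + j.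
Proof.
move=> hst hi hj; apply/eqP => e; move/eqP: hst; apply.
have hL : (0 < L)%N by apply: leq_ltn_trans hi.
have := congr1 (fun x => x %/ L)%N e.
by rewrite /= !divnMDl // !divn_small // !addn0.
Qed.

End Main.

Lemma key (R : realType) (L N : nat) (phi : 'I_N -> fop R L -> fop R (N * L))
  (hphi : forall t : 'I_N, slice_hom R N L t (phi t))
  (H : fop R L) (hpar : parity_preserving R L H) (s t : 'I_N) :
  s != t -> forall O, phi s H * phi t O = phi t O * phi s H.
Proof.
move=> hst O.
case: hpar => sH [hev hHe].
have hs := hphi s; have ht := hphi t.
have phiZs := @phiZ R N L s (phi s) hs.
have phi_sums := @phi_sum R N L s (phi s) hs.
have phi_monos := @phi_monomial R N L s (phi s) hs.
have phi0t := @phi0 R N L t (phi t) ht.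
have phi1t := @phi1 R N L t (phi t) ht.
have phiDt := @phiD R N L t (phi t) ht.
have phiZt := @phiZ R N L t (phi t) ht.
have phiMt := @phiM R N L t (phi t) ht.
have phi_annt := @phi_annih R N L t (phi t) ht.
have phi_crt := @phi_creat R N L t (phi t) ht.
have stepA : forall j b, (j < L)%N ->
    phi s H * lad R (N * L) (t * L + j) b = lad R (N * L) (t * L + j) b * phi s H.
  move=> j b hj; rewrite hHe phi_sums mulr_suml mulr_sumr big_seq [RHS]big_seq.
  apply: eq_bigr => p hp.
  rewrite phiZs scaleMl scaleMr phi_monos prod_anti.
    have : ~~ odd (size p.2) := allP hev p hp.
    by rewrite -signr_odd => /negbTE ->; rewrite expr0 mul1r.
  move=> l; apply: lad_anti.
  - by apply: (@mode_neq L) => //; exact: ltn_ord.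
  - by apply: (@mode_lt N L); exact: ltn_ord.
  - by apply: (@mode_lt N L) => //; exact: ltn_ord.
apply: (@Q_all R L (fun O => phi s H * phi t O = phi t O * phi s H)).
- by rewrite phi0t mulr0 mul0r.
- by rewrite phi1t mulr1 mul1r.
- by move=> A B hA hB; rewrite phiDt mulrDr mulrDl hA hB.
- by move=> c A hA; rewrite phiZt scaleMl scaleMr hA.
- by move=> A B hA hB; rewrite phiMt mulrA hA -mulrA hB mulrA.
- by move=> i hi; rewrite (phi_annt i hi) stepA.
- by move=> i hi; rewrite (phi_crt i hi) stepA.
Qed.

Lemma expm_commZ (R : realType) m (X A : 'M[R[i]]_m) c :
  X * A = A * X -> X * expm (c *: A) = expm (c *: A) * X.
Proof. by move=> h; apply: expm_comm; rewrite scaleMl scaleMr h. Qed.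

Theorem lemma3 (R : realType) (L N : nat) (eps : R) (heps : 0 < eps)
  (phi : 'I_N -> fop R L -> fop R (N * L))
  (hphi : forall t : 'I_N, slice_hom R N L t (phi t))
  (H : fop R L) (hH : herm_op H) (hpar : parity_preserving R L H) :
  (forall t s : 'I_N, phi t H * phi s H = phi s H * phi t H) /\
  (forall O : 'I_N -> fop R L,
     let U (t : 'I_N) := expm (Complex 0 (eps * (t : nat)%:R) *: phi t H) in
     let Uinv (t : 'I_N) := expm (Complex 0 (- (eps * (t : nat)%:R)) *: phi t H) in
     (\prod_(t < N) U t) * (\prod_(t < N) phi t (O t)) * adj (\prod_(t < N) U t)
     = \prod_(t < N) (U t * phi t (O t) * Uinv t)).
Proof.
have hPP : forall t s : 'I_N, phi t H * phi s H = phi s H * phi t H.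
  move=> t s; case: (eqVneq t s) => [->|hne] //.
  exact: (@key R L N phi hphi H hpar t s hne H).
split=> // O U Uinv.
have hherm : forall t, adj (phi t H) = phi t H.
  by move=> t; rewrite -(@phi_adj R N L t (phi t) (hphi t)) hH.
have hU : forall t, adj (U t) = Uinv t.
  by move=> t; rewrite /U /Uinv adj_expm adjZ hherm.
rewrite adj_prod.
under eq_bigr do rewrite hU.
apply: tele; first exact: index_enum_uniq.
move=> s t _ _ hst.
have kO : forall a b : 'I_N, a != b -> phi b (O b) * phi a H = phi a H * phi b (O b).
  by move=> a b hab; rewrite (@key R L N phi hphi H hpar a b hab).
have hts : t != s by rewrite eq_sym.
split.
- by symmetry; exact: (@expm_commZ R _ _ _ _ (kO s t hst)).
- have h1 : phi t H * U s = U s * phi t H by apply: (@expm_commZ R); rewrite hPP.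
  by symmetry; exact: (@expm_commZ R _ _ _ _ (esym h1)).
- by symmetry; exact: (@expm_commZ R _ _ _ _ (kO t s hts)).
- have h1 : phi t H * Uinv s = Uinv s * phi t H by apply: (@expm_commZ R); rewrite hPP.
  by symmetry; exact: (@expm_commZ R _ _ _ _ (esym h1)).
Qed.
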